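(* Let $G\in\mathcal{V}_{\sigma\ell\mathbb{G}_u}$. Then the interpretation of the constant $1$ in $G$ is a weak unit of the $\ell$-group $G$, i.e. $1\ge0$ and for all $f\in G$, $f\wedge1=0$ implies $f=0$.
   Context: $\mathcal{V}_{\sigma\ell\mathbb{G}_u}$ is the infinitary variety of algebras $(G,0,+,-,\vee,\wedge,\bigvee^-,1)$, with $\bigvee^-$ of countably infinite arity ($\bigvee_{n\ge1}^g f_n:=\bigvee^-(g,f_1,f_2,\dots)$) and $1$ a constant, satisfying the $\ell$-group axioms, (A1) $\bigvee_{n\ge1}^g f_n=\bigvee_{n\ge1}^g(f_n\wedge g)$; (A2) $\bigvee_{n\ge1}^g f_n=(f_1\wedge g)\vee\bigvee^-(g,f_2,f_3,\dots)$; (A3) $\bigvee_{n\ge1}^g(f_n\wedge h)\le h$ ($a\le b$ meaning $a\wedge b=a$); and $\bigvee_{n\ge1}^{|f|}(|f|\wedge n1)=|f|$ for all $f$. *)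

(* Defs.v *)
From Stdlib Require Import Arith.

Fixpoint nmul {G : Type} (zero : G) (add : G -> G -> G) (n : nat) (x : G) : G :=
  match n with
  | O => zero
  | S k => add (nmul zero add k x) x
  end.

(* The countable-arity operation bigvee^-(g,f_1,f_2,...) is modelled as
   bsup g f, with f : nat -> G and f 0 playing the role of f_1. *)
Record sigmaLGu : Type := {
  car :> Type;
  zero : car;
  add : car -> car -> car;
  opp : car -> car;
  join : car -> car -> car;
  meet : car -> car -> car;
  bsup : car -> (nat -> car) -> car;
  one : car;
  addA : forall x y z, add x (add y z) = add (add x y) z;
  addC : forall x y, add x y = add y x;
  add0 : forall x, add zero x = x;
  addN : forall x, add (opp x) x = zero;
  joinA : forall x y z, join x (join y z) = join (join x y) z;
  joinC : forall x y, join x y = join y x;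
  meetA : forall x y z, meet x (meet y z) = meet (meet x y) z;
  meetC : forall x y, meet x y = meet y x;
  absorb_jm : forall x y, join x (meet x y) = x;
  absorb_mj : forall x y, meet x (join x y) = x;
  add_join : forall x y z, add x (join y z) = join (add x y) (add x z);
  add_meet : forall x y z, add x (meet y z) = meet (add x y) (add x z);
  A1 : forall g f, bsup g f = bsup g (fun n => meet (f n) g);
  A2 : forall g f, bsup g f = join (meet (f 0) g) (bsup g (fun n => f (S n)));
  (* (A3): bigvee^g (f_n /\ h) <= h, with a <= b meaning a /\ b = a *)
  A3 : forall g f h, meet (bsup g (fun n => meet (f n) h)) h
                     = bsup g (fun n => meet (f n) h);
  A4 : forall f, let a := join f (opp f) in
       bsup a (fun n => meet a (nmul zero add (S n) one)) = a
}.

Definition le (G : sigmaLGu) (a b : G) : Prop := meet G a b = a.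

(* Main.v *)
Require Import Defs.
From Stdlib Require Import FunctionalExtensionality.

Lemma meet_id {G : sigmaLGu} (x : G) : meet G x x = x.
Proof. rewrite <- (absorb_jm G x x) at 2. apply absorb_mj. Qed.

Lemma le_refl {G : sigmaLGu} (x : G) : le G x x.
Proof. apply meet_id. Qed.

Lemma le_anti {G : sigmaLGu} (x y : G) : le G x y -> le G y x -> x = y.
Proof. unfold le; intros H1 H2. rewrite <- H1. rewrite <- H2 at 2. apply meetC. Qed.

Lemma le_trans {G : sigmaLGu} (x y z : G) : le G x y -> le G y z -> le G x z.
Proof. unfold le; intros H1 H2. rewrite <- H1, <- meetA, H2. reflexivity. Qed.

Lemma le_meet_l {G : sigmaLGu} (x y : G) : le G (meet G x y) x.
Proof. unfold le. rewrite (meetC G x y), <- meetA, meet_id. reflexivity. Qed.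

Lemma le_meet_r {G : sigmaLGu} (x y : G) : le G (meet G x y) y.
Proof. rewrite meetC. apply le_meet_l. Qed.

Lemma le_meet {G : sigmaLGu} (z x y : G) : le G z x -> le G z y -> le G z (meet G x y).
Proof. unfold le; intros H1 H2. rewrite meetA, H1, H2. reflexivity. Qed.

Lemma le_joinE {G : sigmaLGu} (x z : G) : le G x z -> join G x z = z.
Proof. unfold le; intros H. rewrite <- H, joinC, meetC. apply absorb_jm. Qed.

Lemma le_join_l {G : sigmaLGu} (x y : G) : le G x (join G x y).
Proof. apply absorb_mj. Qed.

Lemma le_join_r {G : sigmaLGu} (x y : G) : le G y (join G x y).
Proof. rewrite joinC. apply absorb_mj. Qed.

Lemma le_join {G : sigmaLGu} (x y z : G) : le G x z -> le G y z -> le G (join G x y) z.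
Proof. intros H1 H2. unfold le.
  assert (E : join G (join G x y) z = z).
  { rewrite <- joinA, (le_joinE y z H2), (le_joinE x z H1). reflexivity. }
  rewrite <- E. apply absorb_mj. Qed.

Lemma add_mono {G : sigmaLGu} (a x y : G) : le G x y -> le G (add G a x) (add G a y).
Proof. unfold le; intros H. rewrite <- add_meet, H. reflexivity. Qed.

Lemma add0r {G : sigmaLGu} (x : G) : add G x (zero G) = x.
Proof. rewrite addC. apply add0. Qed.

Lemma addNr {G : sigmaLGu} (x : G) : add G x (opp G x) = zero G.
Proof. rewrite addC. apply addN. Qed.

Lemma oppK {G : sigmaLGu} (x : G) : opp G (opp G x) = x.
Proof. rewrite <- (add0r (opp G (opp G x))), <- (addN G x), addA, addN. apply add0. Qed.

Lemma opp0 {G : sigmaLGu} : opp G (zero G) = zero G.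
Proof. rewrite <- (add0r (opp G (zero G))). apply addN. Qed.

Lemma opp_anti {G : sigmaLGu} (x y : G) : le G x y -> le G (opp G y) (opp G x).
Proof. intros H. pose proof (add_mono (add G (opp G x) (opp G y)) x y H) as H2.
  assert (E1 : add G (add G (opp G x) (opp G y)) x = opp G y).
  { rewrite (addC G (opp G x) (opp G y)), <- addA, addN. apply add0r. }
  assert (E2 : add G (add G (opp G x) (opp G y)) y = opp G x).
  { rewrite <- addA, addN. apply add0r. }
  rewrite E1, E2 in H2. exact H2. Qed.

Lemma opp_join {G : sigmaLGu} (a b : G) : opp G (join G a b) = meet G (opp G a) (opp G b).
Proof. apply le_anti.
  - apply le_meet; apply opp_anti; [apply le_join_l | apply le_join_r].
  - rewrite <- (oppK (meet G (opp G a) (opp G b))). apply opp_anti.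
    apply le_join.
    + rewrite <- (oppK a) at 1. apply opp_anti. apply le_meet_l.
    + rewrite <- (oppK b) at 1. apply opp_anti. apply le_meet_r. Qed.

Lemma le_add_pos {G : sigmaLGu} (x c : G) : le G (zero G) c -> le G x (add G x c).
Proof. intros H. rewrite <- (add0r x) at 1. apply add_mono. exact H. Qed.

Lemma meet_mono_r {G : sigmaLGu} (x y z : G) : le G y z -> le G (meet G x y) (meet G x z).
Proof. intros H. apply le_meet. apply le_meet_l. eapply le_trans. apply le_meet_r. exact H. Qed.

Lemma step {G : sigmaLGu} (x y c : G) : le G (zero G) c -> le G (meet G x y) (zero G) ->
  le G (meet G x (add G y c)) (meet G x c).
Proof. intros Hc Hxy. apply le_meet. apply le_meet_l.
  apply le_trans with (add G (meet G x y) c).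
  - rewrite (addC G (meet G x y) c), add_meet, (addC G c x), (addC G c y).
    apply le_meet.
    + eapply le_trans. apply le_meet_l. apply le_add_pos. exact Hc.
    + apply le_meet_r.
  - rewrite <- (add0 G c) at 2. rewrite (addC G (meet G x y) c), (addC G (zero G) c).
    apply add_mono. exact Hxy. Qed.

Lemma nmul_disj {G : sigmaLGu} (x c : G) : le G (zero G) c -> le G (meet G x c) (zero G) ->
  forall k, le G (meet G x (nmul (zero G) (add G) k c)) (zero G).
Proof. intros Hc Hxc k. induction k as [|k IH]; simpl.
  - apply le_meet_r.
  - eapply le_trans. apply step; assumption. exact Hxc. Qed.

Lemma nmul_mono {G : sigmaLGu} (a c : G) : le G a c -> forall k,
  le G (nmul (zero G) (add G) k a) (nmul (zero G) (add G) k c).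
Proof. intros H k. induction k as [|k IH]; simpl. apply le_refl.
  apply le_trans with (add G (nmul (zero G) (add G) k c) a).
  - rewrite (addC G _ a), (addC G _ a). apply add_mono. exact IH.
  - apply add_mono. exact H. Qed.

Lemma kill {G : sigmaLGu} (x : G) : le G (zero G) x ->
  (forall n, le G (meet G x (nmul (zero G) (add G) (S n) (one G))) (zero G)) -> x = zero G.
Proof. intros Hx Hn.
  assert (Ha : join G x (opp G x) = x).
  { rewrite joinC. apply le_joinE. apply le_trans with (zero G).
    rewrite <- opp0. apply opp_anti. exact Hx. exact Hx. }
  pose proof (A4 G x) as H4. cbv zeta in H4. rewrite Ha in H4.
  set (T := fun n => meet G x (nmul (zero G) (add G) (S n) (one G))) in H4.
  assert (ET : T = fun n => meet G (T n) (zero G)).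
  { apply functional_extensionality. intro n. symmetry. apply Hn. }
  rewrite ET in H4.
  pose proof (A3 G x T (zero G)) as H3. rewrite H4 in H3.
  apply le_anti. exact H3. exact Hx. Qed.

Theorem mainTheorem7 (G : sigmaLGu) :
  le G (zero G) (one G) /\
  (forall f : G, meet G f (one G) = zero G -> f = zero G).
Proof.
  assert (P1 : le G (zero G) (one G)).
  { set (c := join G (one G) (zero G)).
    set (x := join G (opp G (one G)) (zero G)).
    assert (Hc : le G (zero G) c) by apply le_join_r.
    assert (Hx0 : le G (zero G) x) by apply le_join_r.
    assert (Ex : x = add G c (opp G (one G))).
    { unfold c, x. rewrite addC, add_join, addN, add0r. apply joinC. }
    assert (Hxc : meet G x c = zero G).
    { rewrite Ex. rewrite <- (add0r c) at 2. rewrite <- add_meet.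
      replace (meet G (opp G (one G)) (zero G)) with (opp G c). apply addNr.
      unfold c. rewrite opp_join, opp0. reflexivity. }
    assert (X0 : x = zero G).
    { apply kill. exact Hx0. intro n.
      eapply le_trans. apply meet_mono_r. apply nmul_mono. apply (le_join_l (one G) (zero G)).
      apply (nmul_disj x c Hc). rewrite Hxc. apply le_refl. }
    assert (H : le G (opp G (one G)) (zero G)).
    { rewrite <- X0. apply le_join_l. }
    apply opp_anti in H. rewrite opp0, oppK in H. exact H. }
  split. exact P1.
  intros f Hf. apply kill.
  - rewrite <- Hf. apply le_meet_l.
  - intro n. apply nmul_disj. exact P1. rewrite Hf. apply le_refl.
Qed.
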